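(* Let $S=(\mathcal{E},\Sigma,X,\mathcal{O})$ and $S'=(\mathcal{E}',\Sigma',X',\mathcal{O}')$ be entities such that $S$ is a sub entity of $S'$ with connecting functions $m,n,l$. Then $m$ and $n$ are continuous for the eigen closure systems: if $F\in\mathcal{F}_{eig}$ then $m^{-1}(F)\in\mathcal{F}'_{eig}$, and if $G'\in\mathcal{G}'_{eig}$ then $n^{-1}(G')\in\mathcal{G}_{eig}$.
   Context: An entity $S=(\mathcal{E},\Sigma,X,\mathcal{O})$ consists of sets $\mathcal{E}$ (experiments), $\Sigma$ (states) and for each $e\in\mathcal{E},p\in\Sigma$ a nonempty set $O(e,p)$, with $X=\bigcup O(e,p)$; $O(e)=\bigcup_pO(e,p)$, $O(p)=\bigcup_eO(e,p)$. $S$ is a sub entity of $S'$ iff there are a surjective function $m:\Sigma'\to\Sigma$, an injective function $n:\mathcal{E}\to\mathcal{E}'$ and an injective function $l:X\to X'$ such that for each $p'\in\Sigma'$ and $e\in\mathcal{E}$, $l$ maps $O(e,m(p'))$ onto $O'(n(e),p')$, i.e. $l(O(e,m(p')))=O'(n(e),p')$. State eigen closure system: for $e\in\mathcal{E}$, $eig_e(A)=\{p\in\Sigma:O(e,p)\subseteq A\}$ ($A\subseteq O(e)$), $\mathcal{F}(e)=\{eig_e(A)\}$, and $\mathcal{F}_{eig}$ is the set of intersections of families of elements of $\bigcup_e\mathcal{F}(e)$. Experiment eigen closure system: for $p\in\Sigma$, $eig_p(A)=\{e\in\mathcal{E}:O(e,p)\subseteq A\}$ ($A\subseteq O(p)$),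 $\mathcal{G}(p)=\{eig_p(A)\}$, and $\mathcal{G}_{eig}$ is the set of intersections of families of elements of $\bigcup_p\mathcal{G}(p)$. Primed objects are defined analogously for $S'$. *)

(* Defs.v *)
Set Implicit Arguments.

(* An entity S = (E, Sigma, X, O): experiments, states, outcomes,
   O e p a nonempty subset of X, and X = union of all O(e,p). *)
Record Entity := {
  Exp : Type;
  St : Type;
  Out : Type;
  O : Exp -> St -> Out -> Prop;
  O_nonempty : forall e p, exists x, O e p x;
  X_union : forall x, exists e p, O e p x
}.

Definition Oe (S : Entity) (e : Exp S) (x : Out S) : Prop := exists p, O S e p x.
Definition Op (S : Entity) (p : St S) (x : Out S) : Prop := exists e, O S e p x.

Definition subset {T : Type} (A B : T -> Prop) : Prop := forall x, A x -> B x.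

Definition eig_e (S : Entity) (e : Exp S) (A : Out S -> Prop) : St S -> Prop :=
  fun p => subset (O S e p) A.
Definition eig_p (S : Entity) (p : St S) (A : Out S -> Prop) : Exp S -> Prop :=
  fun e => subset (O S e p) A.

Definition inFe_union (S : Entity) (G : St S -> Prop) : Prop :=
  exists e (A : Out S -> Prop), subset A (Oe S e) /\ (forall p, G p <-> eig_e S e A p).
Definition inGp_union (S : Entity) (G : Exp S -> Prop) : Prop :=
  exists p (A : Out S -> Prop), subset A (Op S p) /\ (forall e, G e <-> eig_p S p A e).

(* F_eig: intersections of (arbitrary, possibly empty) families of elements
   of the union of the F(e). *)
Definition F_eig (S : Entity) (F : St S -> Prop) : Prop :=
  exists Fam : (St S -> Prop) -> Prop,
    (forall G, Fam G -> inFe_union S G) /\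
    (forall p, F p <-> (forall G, Fam G -> G p)).

Definition G_eig (S : Entity) (H : Exp S -> Prop) : Prop :=
  exists Fam : (Exp S -> Prop) -> Prop,
    (forall G, Fam G -> inGp_union S G) /\
    (forall e, H e <-> (forall G, Fam G -> G e)).

Definition sub_entity (S S' : Entity)
  (m : St S' -> St S) (n : Exp S -> Exp S') (l : Out S -> Out S') : Prop :=
  (forall p, exists p', m p' = p) /\
  (forall e1 e2, n e1 = n e2 -> e1 = e2) /\
  (forall x1 x2, l x1 = l x2 -> x1 = x2) /\
  (forall (p' : St S') (e : Exp S) (x' : Out S'),
      O S' (n e) p' x' <-> exists x, O S e (m p') x /\ l x = x').

(* Main.v *)
Require Import Defs.
From Stdlib Require Import Setoid.

Theorem mainTheorem14 (S S' : Entity)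
  (m : St S' -> St S) (n : Exp S -> Exp S') (l : Out S -> Out S') :
  sub_entity S S' m n l ->
  (forall F : St S -> Prop, F_eig S F -> F_eig S' (fun p' => F (m p'))) /\
  (forall G' : Exp S' -> Prop, G_eig S' G' -> G_eig S (fun e => G' (n e))).
Proof.
  intros [Hsurj [Hn [Hl HO]]]. split.
  - intros F [Fam [HFam HF]].
    exists (fun H => exists G, Fam G /\ forall p', H p' <-> G (m p')).
    split.
    + intros H [G [HG HH]].
      destruct (HFam G HG) as [e [A [HA HGe]]].
      exists (n e), (fun x' => exists x, A x /\ l x = x'). split.
      * intros x' [x [Ax <-]]. destruct (HA x Ax) as [p Hp].
        destruct (Hsurj p) as [p' <-]. exists p'. apply HO. eauto.
      * intros p'. rewrite HH, HGe. unfold eig_e, subset. split.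
        -- intros Hs x' Hx'. apply HO in Hx'. destruct Hx' as [x [Hx <-]]. eauto.
        -- intros Hs x Hx. assert (O S' (n e) p' (l x)) as Hx' by (apply HO; eauto).
           destruct (Hs _ Hx') as [y [Ay Hy]]. apply Hl in Hy. subst y. exact Ay.
    + intros p'. rewrite HF. split.
      * intros Hall H [G [HG HH]]. apply HH. apply Hall. exact HG.
      * intros Hall G HG. apply (Hall (fun q => G (m q))). exists G. split; auto. tauto.
  - intros G' [Fam [HFam HG']].
    exists (fun H => exists H', Fam H' /\ forall e, H e <-> H' (n e)).
    split.
    + intros H [H' [HH' HH]].
      destruct (HFam H' HH') as [p' [A' [HA' HHe]]].
      exists (m p'), (fun x => A' (l x) /\ Op S (m p') x). split.
      * intros x [_ Hx]. exact Hx.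
      * intros e. rewrite HH, HHe. unfold eig_p, subset. split.
        -- intros Hs x Hx. split.
           ++ apply Hs. apply HO. eauto.
           ++ exists e. exact Hx.
        -- intros Hs x' Hx'. apply HO in Hx'. destruct Hx' as [x [Hx <-]].
           apply (Hs x Hx).
    + intros e. rewrite HG'. split.
      * intros Hall H [H0 [HH0 HH]]. apply HH. apply Hall. exact HH0.
      * intros Hall H' HH'. apply (Hall (fun e => H' (n e))). exists H'. split; auto. tauto.
Qed.
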